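(* Let $\bm{A}=[\bm{A}_1\ \bm{A}_2]$ have full column rank with $\bm{A}_j^\top\bm{A}_j=\bm{I}_j$, $\bm{C}:=\bm{A}_2^\top\bm{A}_1\ne0$, $r:=\operatorname{rank}(\bm{C})$. Then $\min_{\gamma_1>0}\rho(\bm{M}(\gamma_1,1))=\dfrac{\lambda_1(\bm{C}\bm{C}^\top)}{2-\lambda_1(\bm{C}\bm{C}^\top)}$ if $r<n_1$, attained at $\gamma_1=\frac{2}{2-\lambda_1(\bm{C}\bm{C}^\top)}$; and $\min_{\gamma_1>0}\rho(\bm{M}(\gamma_1,1))=\dfrac{\lambda_1(\bm{C}\bm{C}^\top)-\lambda_r(\bm{C}\bm{C}^\top)}{2-\lambda_1(\bm{C}\bm{C}^\top)-\lambda_r(\bm{C}\bm{C}^\top)}$ if $r=n_1$, attained (when $r=n_1>1$) at $\gamma_1=\frac{2}{2-\lambda_1(\bm{C}\bm{C}^\top)-\lambda_r(\bm{C}\bm{C}^\top)}$.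
   Context: $\rho$: spectral radius; $\lambda_i$: $i$-th largest eigenvalue. $\bm{M}(\gamma_1,\gamma_2)=\begin{bmatrix}(1-\gamma_1)\bm{I}_1&-\gamma_1\bm{C}^\top\\-\gamma_2(1-\gamma_1)\bm{C}&(1-\gamma_2)\bm{I}_2+\gamma_1\gamma_2\bm{C}\bm{C}^\top\end{bmatrix}$, the two-block gradient descent iteration matrix with stepsizes $\gamma_1,\gamma_2$ for $\frac12\|\bm{A}\bm{x}-\bm{y}\|^2$ under $\bm{A}_j^\top\bm{A}_j=\bm{I}_j$. *)

(* Defs.v *)
From HB Require Import structures.
From mathcomp Require Import all_boot all_order all_algebra.
From mathcomp Require Import complex.
Set Implicit Arguments. Unset Strict Implicit. Unset Printing Implicit Defensive.
Import Order.TTheory GRing.Theory Num.Theory.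
Local Open Scope ring_scope.

Section Defs.
Variable R : rcfType.

(* The eigenvalues (complex, listed with algebraic multiplicity) of a real
   square matrix: the roots of the characteristic polynomial of M viewed
   as a complex matrix. *)
Definition mxspec n (M : 'M[R]_n) : seq R[i] :=
  sval (closed_field_poly_normal (char_poly (map_mx (real_complex R) M))).

Definition specrad n (M : 'M[R]_n) : R :=
  \big[Num.max/0]_(z <- mxspec M) Normc.normc z.

(* lambda_i(S) (i >= 1): the i-th largest eigenvalue (with multiplicity) of a
   matrix S with real spectrum (used for symmetric S = C C^T). *)
Definition eig_desc n (S : 'M[R]_n) (i : nat) : R :=
  nth 0 (sort (fun x y : R => y <= x) (map (@complex.Re R) (mxspec S))) i.-1.

Definition gdM n1 n2 (C : 'M[R]_(n2, n1)) (g1 g2 : R) : 'M[R]_(n1 + n2) :=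
  block_mx ((1 - g1)%:M) (- g1 *: C^T)
           (- (g2 * (1 - g1)) *: C) ((1 - g2)%:M + (g1 * g2) *: (C *m C^T)).

End Defs.

Arguments mxspec {R n} M.
Arguments specrad {R n} M.
Arguments eig_desc {R n} S i.
Arguments gdM {R n1 n2} C g1 g2.

(* Main.v *)
Require Import Defs.
From HB Require Import structures.
From mathcomp Require Import all_boot all_order all_algebra.
From mathcomp Require Import complex.
From mathcomp Require Import ring lra zify.
Import Order.TTheory GRing.Theory Num.Theory.
Local Open Scope ring_scope.
Local Open Scope complex_scope.
Set Warnings "-notation-overridden,-ambiguous-paths".




Lemma eig_swap1 (F : fieldType) (N k : nat) (U : 'M[F]_(N, k)) (V : 'M[F]_(k, N)) x :
  x != 0 -> eigenvalue (U *m V) x -> eigenvalue (V *m U) x.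
Proof.
move=> x0 /eigenvalueP [v Hv v0]; apply/eigenvalueP; exists (v *m U).
  by rewrite mulmxA -(mulmxA v) Hv scalemxAl.
apply: contra v0 => /eqP vU0.
move: Hv; rewrite mulmxA vU0 mul0mx => /esym/eqP.
by rewrite scaler_eq0 (negPf x0).
Qed.

Lemma eig_swap (F : fieldType) (N k : nat) (U : 'M[F]_(N, k)) (V : 'M[F]_(k, N)) x :
  x != 0 -> eigenvalue (U *m V) x = eigenvalue (V *m U) x.
Proof.
by move=> x0; apply/idP/idP; apply: eig_swap1.
Qed.

Lemma eig_affine1 (F : fieldType) n (S : 'M[F]_n) g mu :
  eigenvalue S mu -> eigenvalue ((1 - g)%:M + g *: S) (1 - g + g * mu).
Proof.
move=> /eigenvalueP [v Hv v0]; apply/eigenvalueP; exists v => //.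
by rewrite mulmxDr mul_mx_scalar -scalemxAr Hv scalerA -scalerDl mulrC.
Qed.

Lemma eig_affine2 (F : fieldType) n (S : 'M[F]_n) g x : g != 0 ->
  eigenvalue ((1 - g)%:M + g *: S) x -> eigenvalue S ((x - 1 + g) / g).
Proof.
move=> g0 /eigenvalueP [v Hv v0]; apply/eigenvalueP; exists v => //.
move: Hv; rewrite mulmxDr mul_mx_scalar -scalemxAr => /(canRL (addKr _)).
move=> /(congr1 (fun w => g^-1 *: w)); rewrite scalerA mulVf // scale1r => ->.
rewrite -scaleNr -scalerDl scalerA; congr (_ *: _).
by rewrite mulrC; congr (_ * _); rewrite opprB addrC addrA addrAC.
Qed.

Lemma sylvester_det (Rc : comNzRingType) (a b : nat) (A : 'M[Rc]_(a, b))
  (B : 'M[Rc]_(b, a)) (x : Rc) :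
  x ^+ b * \det (x%:M - A *m B) = x ^+ a * \det (x%:M - B *m A).
Proof.
pose M1 := block_mx (x%:M : 'M_a) A B (1%:M : 'M_b).
pose M2 := block_mx (1%:M : 'M_a) A B (x%:M : 'M_b).
have E1 : \det M1 = \det (x%:M - A *m B).
  have -> : M1 = block_mx (x%:M - A *m B) A 0 1%:M *m block_mx 1%:M 0 B 1%:M.
    by rewrite /M1 mulmx_block ?mulmx1 ?mul1mx ?mulmx0 ?mul0mx ?addr0 ?add0r subrK.
  by rewrite det_mulmx det_ublock det_lblock !det1 !mulr1.
have E2 : \det M2 = \det (x%:M - B *m A).
  have -> : M2 = block_mx 1%:M 0 B (x%:M - B *m A) *m block_mx 1%:M A 0 1%:M.
    by rewrite /M2 mulmx_block ?mulmx1 ?mul1mx ?mulmx0 ?mul0mx ?addr0 ?add0r addrC subrK.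
  by rewrite det_mulmx det_ublock det_lblock !det1 !mul1r mulr1.
have E : block_mx (1%:M : 'M_a) 0 0 (x%:M : 'M_b) *m M1
       = M2 *m block_mx (x%:M : 'M_a) 0 0 (1%:M : 'M_b).
  rewrite /M1 /M2 !mulmx_block !mulmx0 !mul0mx !mul1mx !mulmx1 !addr0 !add0r.
  by rewrite mul_scalar_mx mul_mx_scalar.
have := congr1 determinant E.
rewrite !det_mulmx det_ublock det_lblock !det1 !det_scalar mul1r mulr1 E1 E2.
by move=> ->; rewrite mulrC.
Qed.




Definition Qf (R : rcfType) n (u : 'rV[R[i]]_n) : R[i] :=
  (u *m (map_mx conjc u)^T) 0 0.
Arguments Qf {R n}.

Lemma QfE (R : rcfType) n (u : 'rV[R[i]]_n) :
  Qf u = \sum_j u 0 j * conjc (u 0 j).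
Proof. by rewrite /Qf mxE; apply: eq_bigr => j _; rewrite !mxE. Qed.

Lemma Qf_ge0 (R : rcfType) n (u : 'rV[R[i]]_n) : 0 <= Qf u.
Proof. by rewrite QfE sumr_ge0 // => j _; apply: mulcJ_ge0. Qed.

Lemma Qf_eq0 (R : rcfType) n (u : 'rV[R[i]]_n) : Qf u = 0 -> u = 0.
Proof.
rewrite QfE => /eqP; rewrite psumr_eq0; last by move=> j _; apply: mulcJ_ge0.
move=> /allP H; apply/matrixP => i j; rewrite ord1 !mxE.
have /H /= /eqP := mem_index_enum j.
by move/eqP; rewrite mulf_eq0 conjc_eq0 orbb => /eqP.
Qed.

Lemma conj_real_mul (R : rcfType) n p (u : 'rV[R[i]]_n) (B : 'M[R]_(n, p)) :
  map_mx conjc (u *m map_mx (real_complex R) B)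
  = map_mx conjc u *m map_mx (real_complex R) B.
Proof.
rewrite map_mxM; congr (_ *m _); rewrite -map_mx_comp.
by apply/matrixP => i j; rewrite !mxE /= oppr0.
Qed.

Lemma Qf_eig (R : rcfType) n p (B : 'M[R]_(p, n)) (v : 'rV[R[i]]_n) z :
  v *m (map_mx (real_complex R) (B^T *m B)) = z *: v ->
  z * Qf v = Qf (v *m map_mx (real_complex R) B^T).
Proof.
move=> Hv; rewrite /Qf.
have -> : z * (v *m (map_mx conjc v)^T) 0 0 = (z *: (v *m (map_mx conjc v)^T)) 0 0.
  by rewrite [RHS]mxE.
rewrite scalemxAl -Hv conj_real_mul trmx_mul -!map_trmx trmxK map_mxM -!map_trmx !mulmxA.
by [].
Qed.

Lemma real_ReE (R : rcfType) (w : R[i]) : complex.Im w = 0 -> w = (complex.Re w)%:C.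
Proof. by case: w => a b /= ->. Qed.

Lemma proj_expand (Rc : comNzRingType) m (u ub : 'rV[Rc]_m) (P : 'M[Rc]_m) :
  P^T = P -> P *m P = P ->
  (u - u *m P) *m (ub - ub *m P)^T = u *m ub^T - u *m P *m ub^T.
Proof.
move=> PT PP.
rewrite raddfB /= trmx_mul PT mulmxBl !mulmxBr !mulmxA -(mulmxA u P P) PP.
by rewrite subrr subr0.
Qed.

Lemma S1_spec (R : rcfType) m n1 n2 (A1 : 'M[R]_(m,n1)) (A2 : 'M[R]_(m,n2)) :
  \rank (row_mx A1 A2) = (n1 + n2)%N -> A1^T *m A1 = 1%:M -> A2^T *m A2 = 1%:M ->
  forall z, eigenvalue (map_mx (real_complex R) ((A2^T *m A1)^T *m (A2^T *m A1))) z ->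
  z = (complex.Re z)%:C /\ 0 <= complex.Re z /\ complex.Re z < 1.
Proof.
move=> hr h1 h2 z /eigenvalueP [v Hv v0].
set C := A2^T *m A1 in Hv.
have Qv0 : Qf v != 0 by apply: contra v0 => /eqP /Qf_eq0 ->.
have Qv : 0 < Qf v by rewrite lt_def Qv0 Qf_ge0.
have E := @Qf_eig _ _ _ _ _ _ Hv.
have z0 : 0 <= z.
  have -> : z = Qf (v *m map_mx (real_complex R) C^T) / Qf v by rewrite -E mulfK.
  by rewrite divr_ge0 // Qf_ge0.
have zE : z = (complex.Re z)%:C by apply: real_ReE; exact: ger0_Im.
have Rz0 : 0 <= complex.Re z by move: z0; rewrite lecE => /andP[].
split=> //; split=> //.
have [u uE] : {u | u = v *m map_mx (real_complex R) A1^T} by exists (v *m map_mx (real_complex R) A1^T).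
have [P PE] : {P | P = map_mx (real_complex R) A2 *m map_mx (real_complex R) A2^T} by eexists.
have QuQv : Qf u = Qf v.
  rewrite /Qf uE conj_real_mul trmx_mul -map_trmx trmxK mulmxA.
  by rewrite -(mulmxA v) map_trmx -map_mxM h1 map_mx1 mulmx1.
have vC : v *m map_mx (real_complex R) C^T = u *m map_mx (real_complex R) A2.
  by rewrite /C uE trmx_mul trmxK map_mxM mulmxA.
have PT : P^T = P by rewrite PE trmx_mul -!map_trmx trmxK.
have PP : P *m P = P.
  by rewrite PE mulmxA -(mulmxA _ _ (map_mx (real_complex R) A2)) -map_mxM h2 map_mx1 mulmx1.
have [d dE] : {d | d = u - u *m P} by eexists.
have cd : map_mx conjc d = map_mx conjc u - map_mx conjc u *m P.
  by rewrite dE map_mxB PE mulmxA conj_real_mul conj_real_mul -mulmxA.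
have Qd : Qf d = Qf u - Qf (u *m map_mx (real_complex R) A2).
  rewrite /Qf cd dE proj_expand //.
  have mxB00 : forall (X Y : 'M[R[i]]_1), (X - Y) 0 0 = X 0 0 - Y 0 0.
    by move=> X Y; rewrite !mxE.
  rewrite mxB00; congr (_ - _).
  by rewrite conj_real_mul trmx_mul (map_trmx _ A2) PE !mulmxA.
have E2 : (1 - z) * Qf v = Qf d.
  by rewrite Qd QuQv -vC -E mulrBl mul1r.
have z1 : 0 <= 1 - z.
  by rewrite -(pmulr_lge0 _ Qv) E2 Qf_ge0.
have zn1 : z != 1.
  apply/negP => /eqP z1'; move: E2; rewrite z1' subrr mul0r => /esym /Qf_eq0 d0.
  have : row_mx v (- (v *m map_mx (real_complex R) C^T)) *m (map_mx (real_complex R) (row_mx A1 A2))^T = 0.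
    rewrite map_row_mx tr_row_mx mul_row_col vC mulNmx !map_trmx -mulmxA.
    rewrite -PE -uE; move: d0; rewrite dE => /eqP; rewrite subr_eq0 => /eqP <-.
    by rewrite subrr.
  move/eqP; rewrite mulmx_free_eq0; last first.
    by rewrite /row_free mxrank_tr mxrank_map hr.
  by rewrite row_mx_eq0 (negPf v0).
move: z1 zn1; rewrite zE -(rmorph1 (real_complex R)) -rmorphB ler0c subr_ge0.
by rewrite (inj_eq (@complexI R)) lt_neqAle => -> ->.
Qed.

Lemma S1_nz (R : rcfType) n1 n2 (C : 'M[R]_(n2, n1)) :
  \rank C = n1 ->
  forall z, eigenvalue (map_mx (real_complex R) (C^T *m C)) z -> z != 0.
Proof.
move=> hr z /eigenvalueP [v Hv v0]; apply/negP => /eqP z0.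
have E := @Qf_eig _ _ _ _ _ _ Hv.
move: E; rewrite z0 mul0r => /esym /Qf_eq0 /eqP.
rewrite mulmx_free_eq0 ?(negPf v0) //.
by rewrite /row_free mxrank_map mxrank_tr hr.
Qed.

Lemma S1_zero (R : rcfType) n1 n2 (C : 'M[R]_(n2, n1)) :
  (\rank C < n1)%N -> eigenvalue (map_mx (real_complex R) (C^T *m C)) 0.
Proof.
move=> hr; rewrite /eigenvalue /eigenspace (raddf0 (@scalar_mx _ _)) subr0 kermx_eq0.
rewrite /row_free mxrank_map; apply: contraL hr => /eqP H; rewrite -leqNgt.
by have := mxrankM_maxl C^T C; rewrite mxrank_tr H.
Qed.


Lemma mxspec_prod (R : rcfType) n (M : 'M[R]_n) :
  char_poly (map_mx (real_complex R) M) = \prod_(z <- mxspec M) ('X - z%:P).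
Proof.
rewrite /mxspec; case: closed_field_poly_normal => s /= Hs.
by rewrite {1}Hs (monicP (char_poly_monic _)) scale1r.
Qed.

Lemma mem_mxspec (R : rcfType) n (M : 'M[R]_n) z :
  (z \in mxspec M) = eigenvalue (map_mx (real_complex R) M) z.
Proof. by rewrite eigenvalue_root_char mxspec_prod root_prod_XsubC. Qed.

Lemma size_mxspec (R : rcfType) n (M : 'M[R]_n) : size (mxspec M) = n.
Proof.
have := size_char_poly (map_mx (real_complex R) M).
by rewrite mxspec_prod size_prod_XsubC => -[].
Qed.

Lemma specrad_ge (R : rcfType) n (M : 'M[R]_n) z :
  z \in mxspec M -> Normc.normc z <= specrad M.
Proof.
rewrite /specrad; elim: (mxspec M) => [|y s IH] //=.
rewrite in_cons big_cons => /orP [/eqP ->|/IH H].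
  by rewrite le_max lexx.
by rewrite le_max H orbT.
Qed.

Lemma specrad_le (R : rcfType) n (M : 'M[R]_n) b : 0 <= b ->
  (forall z, z \in mxspec M -> Normc.normc z <= b) -> specrad M <= b.
Proof.
rewrite /specrad => b0; elim: (mxspec M) => [|y s IH] H; first by rewrite big_nil.
rewrite big_cons ge_max H ?mem_head // IH // => z zs.
by apply: H; rewrite in_cons zs orbT.
Qed.

Lemma specrad_ge0 (R : rcfType) n (M : 'M[R]_n) : 0 <= specrad M.
Proof.
rewrite /specrad; elim: (mxspec M) => [|y s IH]; first by rewrite big_nil.
by rewrite big_cons le_max IH orbT.
Qed.

Lemma normc_real (R : rcfType) (x : R) : Normc.normc (x%:C) = `|x|.
Proof. by rewrite /Normc.normc /= expr0n /= addr0 sqrtr_sqr. Qed.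

Lemma gdM_fact (R : rcfType) n1 n2 (C : 'M[R]_(n2, n1)) g :
  gdM C g 1 = col_mx 1%:M (- C) *m row_mx ((1 - g)%:M) (- g *: C^T).
Proof.
rewrite mul_col_row /gdM !mul1mx mul1r mulr1 subrr mul_mx_scalar.
rewrite scalerN -scaleNr mulNmx -scalemxAr.
by rewrite !scaleNr opprK (raddf0 (@scalar_mx _ _)) add0r.
Qed.

Lemma VU_fact (R : comNzRingType) n1 n2 (C : 'M[R]_(n2, n1)) g :
  row_mx ((1 - g)%:M) (- g *: C^T) *m col_mx 1%:M (- C) =
  (1 - g)%:M + g *: (C^T *m C).
Proof.
by rewrite mul_row_col mulmx1 mulmxN -scalemxAl scaleNr opprK.
Qed.

Lemma rc_neq0 (R : rcfType) (g : R) : g != 0 -> g%:C != 0.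
Proof. by move=> g0; rewrite -(rmorph0 (real_complex R)) (inj_eq (@complexI R)). Qed.

Lemma spec_M (R : rcfType) n1 n2 (C : 'M[R]_(n2, n1)) (g : R) (x : R[i]) :
  g != 0 -> x \in mxspec (gdM C g 1) ->
  x = 0 \/ exists2 w, eigenvalue (map_mx (real_complex R) (C^T *m C)) w
                     & x = 1 - g%:C + g%:C * w.
Proof.
move=> g0 Hx; have [->|x0] := eqVneq x 0; [by left | right].
move: Hx; rewrite mem_mxspec gdM_fact map_mxM.
rewrite eig_swap // -map_mxM VU_fact map_mxD map_scalar_mx map_mxZ rmorphB rmorph1.
move=> H; have gc0 := @rc_neq0 _ _ g0.
exists ((x - 1 + g%:C) / g%:C); first exact: eig_affine2.
by rewrite mulrC divfK // [RHS]addrC -addrA [g%:C + _]addrC !subrK.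
Qed.

Lemma spec_M_rev (R : rcfType) n1 n2 (C : 'M[R]_(n2, n1)) (g : R) (w : R[i]) :
  eigenvalue (map_mx (real_complex R) (C^T *m C)) w ->
  1 - g%:C + g%:C * w != 0 ->
  (1 - g%:C + g%:C * w) \in mxspec (gdM C g 1).
Proof.
move=> H x0; rewrite mem_mxspec gdM_fact map_mxM (@eig_swap _ _ _ _ _ _ x0) -map_mxM VU_fact.
rewrite map_mxD map_scalar_mx map_mxZ rmorphB rmorph1.
exact: (@eig_affine1 _ _ _ g%:C w H).
Qed.


Lemma prod_nseq0 (F : fieldType) k :
  \prod_(z <- nseq k (0 : F)) ('X - z%:P) = 'X ^+ k.
Proof.
elim: k => [|k IH]; first by rewrite big_nil expr0.
by rewrite [nseq _ _]/= big_cons IH subr0 exprS.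
Qed.

Lemma count_nz_S2 (R : rcfType) n1 n2 (C : 'M[R]_(n2, n1)) :
  \rank C = n1 -> count (fun z => z != 0) (mxspec (C *m C^T)) = n1.
Proof.
move=> hr.
pose Cc := map_mx (real_complex R) C.
have Syl := @sylvester_det _ _ _ (map_mx polyC Cc) (map_mx polyC Cc^T) 'X.
rewrite -!map_mxM -/(char_poly_mx (Cc *m Cc^T)) -/(char_poly_mx (Cc^T *m Cc)) in Syl.
rewrite -/(char_poly (Cc *m Cc^T)) -/(char_poly (Cc^T *m Cc)) in Syl.
have E1 : Cc *m Cc^T = map_mx (real_complex R) (C *m C^T).
  by rewrite map_mxM map_trmx.
have E2 : Cc^T *m Cc = map_mx (real_complex R) (C^T *m C).
  by rewrite map_mxM map_trmx.
rewrite E1 E2 !mxspec_prod -!prod_nseq0 -!big_cat in Syl.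
have /permP P := prod_XsubC_eq Syl.
have := P (fun z => z != 0); rewrite !count_cat !count_nseq /= eqxx /= !mul0n !add0n => ->.
rewrite -[in RHS](@size_mxspec _ _ (C^T *m C)) -count_predT; apply: eq_in_count => z.
by rewrite mem_mxspec => /(S1_nz _ _ _ _ hr) ->.
Qed.

Lemma cnt_ge_nth (T : Type) (x0 : T) (p : pred T) (s : seq T) k :
  (k <= size s)%N -> (forall i, (i < k)%N -> p (nth x0 s i)) -> (k <= count p s)%N.
Proof.
move=> ks H; rewrite -(cat_take_drop k s) count_cat.
apply: leq_trans (leq_addr _ _).
have : all p (take k s).
  apply/(all_nthP x0) => i; rewrite size_takel // => ik.
  by rewrite nth_take //; apply: H.
by rewrite all_count => /eqP ->; rewrite size_takel.
Qed.

Lemma cnt_le_nth (T : Type) (x0 : T) (p : pred T) (s : seq T) k :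
  (forall i, (k <= i)%N -> (i < size s)%N -> ~~ p (nth x0 s i)) -> (count p s <= k)%N.
Proof.
move=> H; rewrite -(cat_take_drop k s) count_cat.
have -> : count p (drop k s) = 0%N.
  apply/eqP; rewrite -leqn0 leqNgt -has_count; apply/negP => Hh.
  have [j] := @has_nthP _ _ _ x0 Hh.
  rewrite size_drop nth_drop => ik; apply/negP; apply: H; first exact: leq_addr.
  by rewrite -ltn_subRL.
rewrite addn0; apply: leq_trans (count_size _ _) _.
by rewrite size_take_min geq_minl.
Qed.

Lemma eigS2S1 (R : rcfType) n1 n2 (C : 'M[R]_(n2, n1)) z : z != 0 ->
  eigenvalue (map_mx (real_complex R) (C *m C^T)) z =
  eigenvalue (map_mx (real_complex R) (C^T *m C)) z.
Proof. by move=> z0; rewrite !map_mxM -!map_trmx eig_swap. Qed.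


Lemma lowb1 (R : rcfType) (l s g : R) : 0 <= l -> l < 1 -> 0 < g ->
  `|1 - g + g * 0| <= s -> `|1 - g + g * l| <= s -> l / (2 - l) <= s.
Proof.
move=> l0 l1 g0; rewrite mulr0 addr0 => H1 H2.
have D : 0 < 2 - l by lra.
rewrite ler_pdivrMr //.
have a : g - 1 <= s by move: H1; rewrite ler_norml; lra.
have b : 1 - g + g * l <= s by move: H2; rewrite ler_norml; lra.
nra.
Qed.

Lemma upb1 (R : rcfType) (l mu : R) : 0 <= mu -> mu <= l -> l < 1 ->
  `|1 - 2 / (2 - l) + 2 / (2 - l) * mu| <= l / (2 - l).
Proof.
move=> m0 ml l1.
have D : 0 < 2 - l by lra.
have E : 1 - 2 / (2 - l) + 2 / (2 - l) * mu = (2 * mu - l) / (2 - l).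
  by field; rewrite gt_eqF.
rewrite E normrM [X in _ * X]gtr0_norm ?invr_gt0 // ler_pM2r ?invr_gt0 // ler_norml; lra.
Qed.

Lemma lowb2 (R : rcfType) (l1 lr s g : R) : 0 < lr -> lr <= l1 -> l1 < 1 -> 0 < g ->
  `|1 - g + g * l1| <= s -> `|1 - g + g * lr| <= s ->
  (l1 - lr) / (2 - l1 - lr) <= s.
Proof.
move=> lr0 ll hl1 g0 H1 H2.
have D : 0 < 2 - l1 - lr by lra.
rewrite ler_pdivrMr //.
have a : 1 - g + g * l1 <= s by move: H1; rewrite ler_norml; lra.
have b : - (1 - g + g * lr) <= s by move: H2; rewrite ler_norml; lra.
nra.
Qed.

Lemma upb2 (R : rcfType) (l1 lr mu : R) : 0 < lr -> lr <= mu -> mu <= l1 -> l1 < 1 ->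
  `|1 - 2 / (2 - l1 - lr) + 2 / (2 - l1 - lr) * mu| <= (l1 - lr) / (2 - l1 - lr).
Proof.
move=> lr0 m0 ml l1'.
have D : 0 < 2 - l1 - lr by lra.
have E : 1 - 2 / (2 - l1 - lr) + 2 / (2 - l1 - lr) * mu
         = (2 * mu - l1 - lr) / (2 - l1 - lr).
  by field; rewrite gt_eqF.
rewrite E normrM [X in _ * X]gtr0_norm ?invr_gt0 // ler_pM2r ?invr_gt0 // ler_norml; lra.
Qed.


Theorem mainTheorem9 (R : rcfType) (m n1 n2 : nat)
    (A1 : 'M[R]_(m, n1)) (A2 : 'M[R]_(m, n2)) :
  \rank (row_mx A1 A2) = (n1 + n2)%N ->
  A1^T *m A1 = 1%:M ->
  A2^T *m A2 = 1%:M ->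
  let C := A2^T *m A1 in
  C != 0 ->
  let r : nat := \rank C in
  let l1 := eig_desc (C *m C^T) 1 in
  let lr := eig_desc (C *m C^T) r in
  ((r < n1)%N ->
     let v := l1 / (2 - l1) in
     let g := 2 / (2 - l1) in
     (forall g1 : R, 0 < g1 -> v <= specrad (gdM C g1 1))
     /\ 0 < g /\ specrad (gdM C g 1) = v)
  /\
  (r = n1 ->
     let v := (l1 - lr) / (2 - l1 - lr) in
     let g := 2 / (2 - l1 - lr) in
     (forall g1 : R, 0 < g1 -> v <= specrad (gdM C g1 1))
     /\ (exists2 g1 : R, 0 < g1 & specrad (gdM C g1 1) = v)
     /\ ((1 < n1)%N -> 0 < g /\ specrad (gdM C g 1) = v)).
Proof.
move=> hr h1 h2 C Cn0 r l1 lr.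
have spec1 := @S1_spec _ _ _ _ A1 A2 hr h1 h2; rewrite -/C in spec1.
pose S1c := map_mx (real_complex R) (C^T *m C).
have PR : forall mu : R, eigenvalue S1c mu%:C -> 0 <= mu /\ mu < 1.
  by move=> mu /spec1 [_ []].
have rcE : forall g mu : R, (1 - g + g * mu)%:C = 1 - g%:C + g%:C * mu%:C.
  by move=> g mu; rewrite rmorphD rmorphB rmorph1 rmorphM.
have lowA : forall g mu : R, 0 < g -> eigenvalue S1c mu%:C ->
    `|1 - g + g * mu| <= specrad (gdM C g 1).
  move=> g mu g0 Pmu; have [->|nz] := eqVneq (1 - g + g * mu) 0.
    by rewrite normr0 specrad_ge0.
  have := @spec_M_rev _ _ _ C g mu%:C Pmu.
  rewrite -rcE => /(_ (@rc_neq0 _ _ nz)) /specrad_ge.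
  by rewrite normc_real.
have upB : forall g b : R, 0 < g -> 0 <= b ->
    (forall mu : R, eigenvalue S1c mu%:C -> `|1 - g + g * mu| <= b) ->
    specrad (gdM C g 1) <= b.
  move=> g b g0 b0 H; apply: specrad_le => // z.
  move=> /(@spec_M _ _ _ C g z (lt0r_neq0 g0)) [-> | [w Hw ->]].
    by rewrite Normc.normc0.
  have [wE _] := spec1 _ Hw; rewrite wE in Hw *.
  by rewrite -rcE normc_real; apply: H.
pose t := map (@complex.Re R) (mxspec (C *m C^T)).
pose u := sort (fun x y : R => y <= x) t.
have l1E : l1 = nth 0 u 0 by [].
have lrE : lr = nth 0 u r.-1 by [].
have szu : size u = n2 by rewrite size_sort size_map size_mxspec.
have rpos : (0 < r)%N by rewrite lt0n mxrank_eq0.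
have rle : (r <= n2)%N by apply: rank_leq_row.
have tT : forall y, y \in t -> 0 <= y /\ (y != 0 -> eigenvalue S1c y%:C).
  move=> y /mapP [z zin ->]; have [->|z0] := eqVneq z 0.
    by split => //; rewrite eqxx.
  move: zin; rewrite mem_mxspec (@eigS2S1 _ _ _ _ _ z0) => zin.
  have [zE [Rz0 _]] := spec1 _ zin; split; first exact: Rz0.
  move=> _.
  by rewrite -zE.
have Pt : forall mu : R, eigenvalue S1c mu%:C -> mu != 0 -> mu \in t.
  move=> mu Pmu mu0; apply/mapP; exists mu%:C => //.
  by rewrite mem_mxspec (@eigS2S1 _ _ _ _ _ (@rc_neq0 _ _ mu0)).
have mut : forall x, (x \in u) = (x \in t) by move=> x; rewrite mem_sort.
have su : sorted (fun x y : R => y <= x) u.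
  by apply: sort_sorted => x y; exact: le_total.
have mono : forall i j, (i <= j)%N -> (j < size u)%N -> nth 0 u j <= nth 0 u i.
  move=> i j ij js.
  apply: (sorted_leq_nth (fun y x z h1 h2 => le_trans h2 h1) (fun x => lexx x) 0 su) => //.
    by rewrite inE (leq_ltn_trans ij js).
have szpos : (0 < size u)%N by rewrite szu (leq_trans rpos rle).
have l1t : l1 \in t by rewrite -mut l1E mem_nth.
have l1max : forall x, x \in t -> x <= l1.
  move=> x; rewrite -mut => xu; rewrite l1E -(nth_index 0 xu).
  by apply: mono => //; rewrite index_mem.
split.
- move=> rlt v g.
  have P0 : eigenvalue S1c 0%:C by apply: S1_zero.
  have [l10 Hl1] := tT _ l1t.
  have Pl1 : eigenvalue S1c l1%:C.
    by have [->|nz] := eqVneq l1 0; [exact: P0 | exact: Hl1].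
  have [_ l1lt] := PR _ Pl1.
  have Pmax : forall mu, eigenvalue S1c mu%:C -> mu <= l1.
    move=> mu Pmu; have [->|nz] := eqVneq mu 0; first exact: l10.
    by apply: l1max; apply: (Pt _ Pmu nz).
  have lower : forall g1 : R, 0 < g1 -> v <= specrad (gdM C g1 1).
    move=> g1 g10.
    exact: (@lowb1 _ l1 _ g1 l10 l1lt g10 (lowA g1 0 g10 P0) (lowA g1 l1 g10 Pl1)).
  have g0 : 0 < g by apply: divr_gt0; lra.
  split; first exact: lower.
  split; first exact: g0.
  apply/le_anti/andP; split; last exact: (lower g g0).
  apply: (upB _ _ g0); first by apply: divr_ge0; lra.
  move=> mu Pmu; have [mu0 _] := PR _ Pmu; exact: (@upb1 _ l1 mu mu0 (Pmax _ Pmu) l1lt).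
- move=> req v g.
  have hrk : \rank C = n1 by [].
  have cnt : count (fun x : R => 0 < x) u = n1.
    have -> : count (fun x : R => 0 < x) u = count (fun x : R => 0 < x) t.
      by apply/permP; rewrite perm_sort.
    rewrite count_map -[RHS](@count_nz_S2 _ _ _ C hrk); apply: eq_in_count => z zin /=.
    have [->|z0] := eqVneq z 0; first by rewrite ltxx.
    move: zin; rewrite mem_mxspec (@eigS2S1 _ _ _ _ _ z0) => zin.
    have [zE [Rz0 _]] := spec1 _ zin.
    rewrite lt_def Rz0 andbT; apply: contra z0 => /eqP Rz.
    by rewrite zE Rz.
  have n1pos : (0 < n1)%N by rewrite -req.
  have n1le : (n1 <= size u)%N by rewrite szu -req.
  have lrE' : lr = nth 0 u n1.-1 by rewrite lrE req.
  have lrpos : 0 < lr.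
    rewrite ltNge; apply/negP => lrle.
    have := @cnt_le_nth _ 0 (fun x : R => 0 < x) u n1.-1.
    rewrite cnt; move=> /(_ _) H; suff : (n1 <= n1.-1)%N by move: n1pos; clear; lia.
    apply: H => i ki isz; rewrite -leNgt; apply: le_trans lrle.
    by rewrite lrE'; apply: mono.
  have lrt : lr \in t by rewrite -mut lrE' mem_nth // prednK.
  have Plr : eigenvalue S1c lr%:C by apply: (tT _ lrt).2; rewrite (gt_eqF lrpos).
  have Pmin : forall mu, eigenvalue S1c mu%:C -> lr <= mu.
    move=> mu Pmu.
    have mu0 : mu != 0.
      apply: contraTneq Pmu => ->; apply/negP => /(@S1_nz _ _ _ C hrk); by rewrite eqxx.
    have [mu_ge0 _] := PR _ Pmu.
    have mupos : 0 < mu by rewrite lt_def mu0 mu_ge0.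
    have muu : mu \in u by rewrite mut; exact: (Pt mu Pmu mu0).
    have js := muu; rewrite -index_mem in js.
    have nE := nth_index 0 muu.
    case: (leqP (index mu u) n1.-1) => hj.
      rewrite -nE lrE'; apply: mono; first exact: hj.
      by move: n1pos n1le; clear; lia.
    have n1j : (n1 <= index mu u)%N by move: hj; rewrite -(prednK n1pos).
    have := @cnt_ge_nth _ 0 (fun x : R => 0 < x) u n1.+1.
    rewrite cnt ltnn; move=> /(_ (leq_ltn_trans n1j js)) H.
    suff : false by [].
    apply: H => i ii; apply: lt_le_trans mupos _; rewrite -nE; apply: mono => //.
    by apply: leq_trans n1j.
  have lrl1 : lr <= l1 by rewrite l1E lrE'; apply: mono => //; rewrite prednK.
  have l1t' := l1t.
  have Pl1 : eigenvalue S1c l1%:C by apply: (tT _ l1t).2; rewrite (gt_eqF (lt_le_trans lrpos lrl1)).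
  have [_ l1lt] := PR _ Pl1.
  have lower : forall g1 : R, 0 < g1 -> v <= specrad (gdM C g1 1).
    move=> g1 g10.
    exact: (@lowb2 _ l1 lr _ g1 lrpos lrl1 l1lt g10 (lowA g1 l1 g10 Pl1) (lowA g1 lr g10 Plr)).
  have g0 : 0 < g by apply: divr_gt0; lra.
  have sg : specrad (gdM C g 1) = v.
    apply/le_anti/andP; split; last exact: (lower g g0).
    apply: (upB _ _ g0); first by apply: divr_ge0; lra.
    move=> mu Pmu; apply: (@upb2 _ l1 lr mu lrpos (Pmin _ Pmu) _ l1lt).
    apply: l1max; apply: (Pt _ Pmu); by rewrite (gt_eqF (lt_le_trans lrpos (Pmin _ Pmu))).
  split => //; split; first by exists g.
  by move=> _; split.
Qed.
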